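(* Let $V$ be countably infinite, $\psi:K_V\to\mathbb N$ a fixed bijection, and $\sigma$ a permutation of $\mathbb N$. For $f:\mathscr{G}(V)\to\mathbb R$ and $G\in\mathscr{G}(V)\setminus\{\emptyset,K_V\}$ define the $\sigma$-twisted derivative $$f'_\sigma(G) := \lim_{G_1\to G,\ G_1\in\mathscr{G}'(V)\setminus\{G\}}\frac{f(G_1)-f(G)}{\|G_1\|_{\sigma\circ\psi,2}-\|G\|_{\sigma\circ\psi,2}}$$ (if the limit exists). (a) If $\sigma\in S_\infty$ and $f'(G)$ exists, then $f'_\sigma(G)$ exists and equals $f'(G)$. (b) If $\sigma\notin S_\infty$, $G\in\mathscr{G}'(V)$, and $f'(G)$ exists and is nonzero, then $f'_\sigma(G)$ does not exist.
   Context: $K_V$ is the set of $2$-element subsets of $V$; $\mathscr{G}(V)$ is the set of simple graphs on $V$ identified with their edge sets, with the product topology of $\{0,1\}^{K_V}$; $\mathscr{G}'(V)$ is the set of graphs $G$ with both $G$ and $K_V\setminus G$ infinite. $\mathbb N=\{1,2,\dots\}$. For a bijection $\chi:K_V\to\mathbb N$, $\|G\|_{\chi,2}:=\sum_{e\in G}2^{-\chi(e)}$. $f'(G) := f'_{\mathrm{id}}(G)$ is the derivative with respect to $\psi$, i.e. the same limit with $\|\cdot\|_{\psi,2}$ in the denominator (limits taken in the product topology). $S_\infty$ is the group of permutations of $\mathbb N$ fixing all but finitely many elements. *)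

(* Defs.v *)
From Stdlib Require Import Reals List Classical ClassicalEpsilon.
Open Scope R_scope.

Definition is_2set {V : Type} (e : V -> Prop) : Prop :=
  exists x y : V, x <> y /\ forall z, e z <-> (z = x \/ z = y).

Definition K (V : Type) : Type := { e : V -> Prop | is_2set e }.

Definition graph (V : Type) : Type := K V -> bool.

Record Bij (A B : Type) : Type := {
  fw : A -> B;
  bw : B -> A;
  bw_fw : forall a, bw (fw a) = a;
  fw_bw : forall b, fw (bw b) = b }.
Arguments fw {A B} _ _.
Arguments bw {A B} _ _.

(* composition: (bij_comp g h) has forward map  h o g *)
Definition bij_comp {A B C : Type} (g : Bij A B) (h : Bij B C) : Bij A C.
Proof.
  refine {| fw := fun a => fw h (fw g a); bw := fun c => bw g (bw h c) |}.
  - intro a. rewrite (bw_fw _ _ h). apply bw_fw.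
  - intro c. rewrite (fw_bw _ _ g). apply fw_bw.
Defined.

(* Convention: the paper's N = {1,2,...} is Rocq's nat shifted by one,
   so a bijection chi : K_V -> N is represented by chi : Bij (K V) nat
   and the paper's value chi(e) is (fw chi e + 1). *)

(* ||G||_{chi,2} = sum_{e in G} 2^{-chi(e)}, summed along the enumeration chi^{-1}. *)
Definition norm2 {V : Type} (chi : Bij (K V) nat) (G : graph V) : R :=
  epsilon (inhabits 0)
    (fun l => infinite_sum
       (fun n => if G (bw chi n) then (/ 2) ^ (S n) else 0) l).

Definition finite_set {V : Type} (G : graph V) : Prop :=
  exists l : list (K V), forall e, G e = true -> In e l.

Definition cofinite_set {V : Type} (G : graph V) : Prop :=
  exists l : list (K V), forall e, G e = false -> In e l.

Definition Gprime {V : Type} (G : graph V) : Prop :=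
  ~ finite_set G /\ ~ cofinite_set G.

Definition empty_graph (V : Type) : graph V := fun _ => false.
Definition complete_graph (V : Type) : graph V := fun _ => true.

(* Limit in the product topology of {0,1}^{K_V}: basic neighbourhoods of G
   are the graphs agreeing with G on a finite list of edges.
   has_deriv f chi G L  :  lim_{G1 -> G, G1 in G'(V) \ {G}}
        (f G1 - f G) / (||G1||_{chi,2} - ||G||_{chi,2})  =  L. *)
Definition has_deriv {V : Type} (f : graph V -> R) (chi : Bij (K V) nat)
  (G : graph V) (L : R) : Prop :=
  forall eps, eps > 0 ->
    exists l : list (K V),
      forall G1 : graph V,
        Gprime G1 -> G1 <> G ->
        (forall e, In e l -> G1 e = G e) ->
        Rabs ((f G1 - f G) / (norm2 chi G1 - norm2 chi G) - L) < eps.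

Definition S_infinity (sigma : Bij nat nat) : Prop :=
  exists N : nat, forall n : nat, (N <= n)%nat -> fw sigma n = n.

(* Main.v *)
Require Import Defs.
From Stdlib Require Import Reals List Classical ClassicalEpsilon Lia Lra FinFun.
Open Scope R_scope.

Lemma norm2_spec {V : Type} (chi : Bij (K V) nat) (G : graph V) :
  infinite_sum (fun n => if G (bw chi n) then (/ 2) ^ (S n) else 0) (norm2 chi G).
Proof.
  unfold norm2. apply epsilon_spec.
  destruct (Rseries_CV_comp (fun n => if G (bw chi n) then (/ 2) ^ (S n) else 0)
    (fun n => 1 * (/2) ^ n)) as [l Hl].
  - intro n. assert (0 < (/2)^n) by (apply pow_lt; lra).
    destruct (G (bw chi n)); simpl; split; try lra; nra.
  - exists (/ (1 - /2)). apply (GP_infinite (/2)). rewrite Rabs_pos_eq; lra.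
  - exists l. exact Hl.
Qed.

Lemma sum_termwise (x1 x y1 y : nat -> R) l1 l m1 m :
  infinite_sum x1 l1 -> infinite_sum x l -> infinite_sum y1 m1 -> infinite_sum y m ->
  (forall n, x1 n - x n = y1 n - y n) -> l1 - l = m1 - m.
Proof.
  intros H1 H2 H3 H4 Hd.
  pose proof (CV_minus _ _ _ _ H1 H2) as A.
  pose proof (CV_minus _ _ _ _ H3 H4) as B.
  apply (UL_sequence _ _ _ A).
  intros eps He. destruct (B eps He) as [N HN]. exists N. intros n Hn.
  rewrite <- !minus_sum in *. specialize (HN n Hn).
  rewrite (sum_eq _ (fun i => y1 i - y i)); auto.
  rewrite minus_sum; exact HN.
Qed.

Lemma sum_spike (x1 x : nat -> R) l1 l k :
  infinite_sum x1 l1 -> infinite_sum x l ->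
  (forall n, n <> k -> x1 n = x n) -> l1 - l = x1 k - x k.
Proof.
  intros H1 H2 Hd.
  pose proof (CV_minus _ _ _ _ H1 H2) as A.
  apply (UL_sequence _ _ _ A).
  assert (E : forall n, (k <= n)%nat -> sum_f_R0 x1 n - sum_f_R0 x n = x1 k - x k).
  { assert (E0 : forall n, (n < k)%nat -> sum_f_R0 x1 n - sum_f_R0 x n = 0).
    { induction n; intro Hn; simpl.
      - rewrite Hd; [lra| lia].
      - rewrite Hd by lia. specialize (IHn ltac:(lia)). lra. }
    induction n; intro Hn.
    - assert (k = 0%nat) by lia. subst. simpl. reflexivity.
    - destruct (Nat.eq_dec k (S n)) as [->|Hne].
      + simpl. pose proof (E0 n ltac:(lia)). lra.
      + simpl. rewrite Hd by lia. specialize (IHn ltac:(lia)). lra. }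
  intros eps He. exists k. intros n Hn. rewrite E by lia. unfold Rdist.
  rewrite Rminus_diag, Rabs_R0. lra.
Qed.

Lemma bound_exists (f : nat -> nat) (M : nat) :
  exists C, (M <= C)%nat /\ forall m, (m < M)%nat -> (f m < C)%nat.
Proof.
  induction M as [|M [C [H1 H2]]].
  - exists 0%nat. split; [lia| intros; lia].
  - exists (C + f M + 1)%nat. split; [lia|].
    intros m Hm. destruct (Nat.eq_dec m M); [subst; lia|]. specialize (H2 m ltac:(lia)). lia.
Qed.

Lemma not_Sinf_up (s : Bij nat nat) :
  ~ S_infinity s -> forall M, exists n, (M <= n)%nat /\ (n < fw s n)%nat.
Proof.
  intros HS M. apply NNPP. intro Hn. apply HS.
  assert (Hle : forall n, (M <= n)%nat -> (fw s n <= n)%nat).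
  { intros n Hn'. destruct (Nat.le_gt_cases (fw s n) n); auto.
    exfalso; apply Hn; exists n; auto. }
  destruct (bound_exists (fw s) M) as [C [HC1 HC2]].
  exists C. intros K HK.
  set (l := map (fw s) (seq 0 (S K))).
  assert (ND : NoDup l).
  { apply Injective_map_NoDup; [|apply seq_NoDup].
    intros a b E. rewrite <- (bw_fw _ _ s a), <- (bw_fw _ _ s b), E. reflexivity. }
  assert (Inc : incl l (seq 0 (S K))).
  { intros v Hv. unfold l in Hv. apply in_map_iff in Hv as [m [<- Hm]].
    apply in_seq in Hm. apply in_seq.
    destruct (Nat.lt_ge_cases m M). { specialize (HC2 m H). lia. }
    specialize (Hle m H). lia. }
  assert (Hlen : (length (seq 0 (S K)) <= length l)%nat) by (unfold l; rewrite length_map; lia).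
  assert (Inc2 := NoDup_length_incl ND Hlen Inc).
  assert (HK' : In K l) by (apply Inc2, in_seq; lia).
  unfold l in HK'. apply in_map_iff in HK' as [m [Em Hm]]. apply in_seq in Hm.
  destruct (Nat.lt_ge_cases m M). { specialize (HC2 m H). lia. }
  specialize (Hle m H). assert (m = K) by lia. subst m. assumption.
Qed.

Definition inv_bij {A B : Type} (s : Bij A B) : Bij B A :=
  {| fw := bw s; bw := fw s; bw_fw := fw_bw _ _ s; fw_bw := bw_fw _ _ s |}.

Lemma not_Sinf_down (s : Bij nat nat) :
  ~ S_infinity s -> forall M, exists n, (M <= n)%nat /\ (fw s n < n)%nat.
Proof.
  intros HS M.
  assert (HS' : ~ S_infinity (inv_bij s)).
  { intros [N HN]. apply HS. exists N. intros n Hn. specialize (HN n Hn). simpl in HN.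
    rewrite <- HN at 1. apply fw_bw. }
  destruct (not_Sinf_up _ HS' M) as [m [H1 H2]]. simpl in H2.
  exists (bw s m). rewrite fw_bw. lia.
Qed.

Lemma list_bound {V : Type} (psi : Bij (K V) nat) (l : list (K V)) :
  exists M, forall e, In e l -> (fw psi e < M)%nat.
Proof.
  induction l as [|a l [M HM]].
  - exists 0%nat. intros e [].
  - exists (M + fw psi a + 1)%nat. intros e [<-|H]; [lia|]. specialize (HM e H); lia.
Qed.

Definition flip {V : Type} (psi : Bij (K V) nat) (G : graph V) (n : nat) : graph V :=
  fun e => if Nat.eq_dec (fw psi e) n then negb (G e) else G e.

Lemma flip_at {V : Type} (psi : Bij (K V) nat) G n :
  flip psi G n (bw psi n) = negb (G (bw psi n)).
Proof. unfold flip. rewrite fw_bw. destruct (Nat.eq_dec n n); congruence. Qed.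

Lemma flip_other {V : Type} (psi : Bij (K V) nat) G n e :
  fw psi e <> n -> flip psi G n e = G e.
Proof. unfold flip. destruct (Nat.eq_dec (fw psi e) n); congruence. Qed.

Lemma flip_finite {V : Type} (psi : Bij (K V) nat) G n :
  finite_set (flip psi G n) -> finite_set G.
Proof.
  intros [l Hl]. exists (bw psi n :: l). intros e He.
  destruct (Nat.eq_dec (fw psi e) n) as [E|E].
  - left. rewrite <- E. apply bw_fw.
  - right. apply Hl. rewrite flip_other; auto.
Qed.

Lemma flip_cofinite {V : Type} (psi : Bij (K V) nat) G n :
  cofinite_set (flip psi G n) -> cofinite_set G.
Proof.
  intros [l Hl]. exists (bw psi n :: l). intros e He.
  destruct (Nat.eq_dec (fw psi e) n) as [E|E].
  - left. rewrite <- E. apply bw_fw.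
  - right. apply Hl. rewrite flip_other; auto.
Qed.

Lemma flip_Gprime {V : Type} (psi : Bij (K V) nat) G n :
  Gprime G -> Gprime (flip psi G n).
Proof.
  intros [H1 H2]; split; intro H.
  - apply H1, (flip_finite psi G n), H.
  - apply H2, (flip_cofinite psi G n), H.
Qed.

Lemma flip_neq {V : Type} (psi : Bij (K V) nat) G n : flip psi G n <> G.
Proof.
  intro E. pose proof (f_equal (fun g => g (bw psi n)) E) as E'. simpl in E'.
  rewrite flip_at in E'. destruct (G (bw psi n)); discriminate.
Qed.

Lemma norm2_flip_gen {V : Type} (chi : Bij (K V) nat) (G G1 : graph V) k :
  (forall j, j <> k -> G1 (bw chi j) = G (bw chi j)) ->
  G1 (bw chi k) = negb (G (bw chi k)) ->
  norm2 chi G1 - norm2 chi G =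
    (if G (bw chi k) then - (/2)^(S k) else (/2)^(S k)).
Proof.
  intros Ho Hk.
  rewrite (sum_spike _ _ _ _ k (norm2_spec chi G1) (norm2_spec chi G)).
  - rewrite Hk. destruct (G (bw chi k)); simpl; lra.
  - intros j Hj. rewrite Ho; auto.
Qed.

Lemma abs_quot (A : R) (b : bool) k :
  Rabs (A / (if b then - (/2)^k else (/2)^k)) = Rabs A * 2^k.
Proof.
  assert (P : 0 < (/2)^k) by (apply pow_lt; lra).
  destruct b; unfold Rdiv; rewrite Rabs_mult, Rabs_inv; try rewrite Rabs_Ropp;
  rewrite (Rabs_pos_eq ((/2)^k)) by lra; rewrite pow_inv, Rinv_inv; reflexivity.
Qed.

Lemma pow2_mono (a b : nat) : (a < b)%nat -> 2 * 2^(S a) <= 2^(S b).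
Proof.
  intro H. replace (2 * 2^(S a)) with (2^(S (S a))) by (simpl; ring).
  apply Rle_pow; [lra|lia].
Qed.

Theorem theorem3p10 (V : Type) (psi : Bij (K V) nat) (sigma : Bij nat nat)
  (f : graph V -> R) :
  (forall (G : graph V) (L : R),
     S_infinity sigma ->
     G <> empty_graph V -> G <> complete_graph V ->
     has_deriv f psi G L ->
     has_deriv f (bij_comp psi sigma) G L)
  /\
  (forall (G : graph V) (L : R),
     ~ S_infinity sigma ->
     Gprime G ->
     has_deriv f psi G L -> L <> 0 ->
     ~ (exists L' : R, has_deriv f (bij_comp psi sigma) G L')).
Proof.
  split.
  - intros G L [N HN] _ _ Hd eps He.
    destruct (Hd eps He) as [l Hl].
    exists (l ++ map (bw psi) (seq 0 N)). intros G1 HG1 Hne Hag.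
    assert (Eq : norm2 (bij_comp psi sigma) G1 - norm2 (bij_comp psi sigma) G
                 = norm2 psi G1 - norm2 psi G).
    { apply (sum_termwise _ _ _ _ _ _ _ _ (norm2_spec _ G1) (norm2_spec _ G)
               (norm2_spec psi G1) (norm2_spec psi G)).
      intro n. cbn. destruct (Nat.lt_ge_cases n N) as [Hn|Hn].
      - assert (Hb : (bw sigma n < N)%nat).
        { destruct (Nat.lt_ge_cases (bw sigma n) N) as [h|h]; auto.
          pose proof (HN _ h) as E. rewrite fw_bw in E. lia. }
        rewrite (Hag (bw psi (bw sigma n))), (Hag (bw psi n)); [lra| |];
        apply in_or_app; right; apply in_map, in_seq; lia.
      - assert (E : bw sigma n = n).
        { pose proof (bw_fw _ _ sigma n) as E. rewrite HN in E by lia. exact E. }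
        rewrite E. lra. }
    rewrite Eq. apply Hl; auto. intros e He'. apply Hag, in_or_app; left; exact He'.
  - intros G L HS HG Hd HL [L' Hd'].
    set (e := Rabs L / 4).
    assert (Hpos : 0 < Rabs L) by (apply Rabs_pos_lt; exact HL).
    assert (He : e > 0) by (unfold e; lra).
    destruct (Hd e He) as [l1 Hl1]. destruct (Hd' e He) as [l2 Hl2].
    destruct (list_bound psi (l1 ++ l2)) as [M HM].
    assert (Key : forall n, (M <= n)%nat -> exists q r A,
      Rabs (q - L) < e /\ Rabs (r - L') < e /\ Rabs q = A * 2^(S n) /\
      Rabs r = A * 2^(S (fw sigma n)) /\ 0 <= A).
    { intros n Hn. set (G1 := flip psi G n).
      assert (Ag : forall ll e0, In e0 ll -> incl ll (l1 ++ l2) -> G1 e0 = G e0).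
      { intros ll e0 Hi Hincl. unfold G1. apply flip_other.
        specialize (HM e0 (Hincl _ Hi)). lia. }
      assert (D1 : norm2 psi G1 - norm2 psi G =
                   (if G (bw psi n) then - (/2)^(S n) else (/2)^(S n))).
      { apply norm2_flip_gen.
        - intros j Hj. unfold G1. apply flip_other. rewrite fw_bw. exact Hj.
        - unfold G1. apply flip_at. }
      assert (D2 : norm2 (bij_comp psi sigma) G1 - norm2 (bij_comp psi sigma) G =
                   (if G (bw psi n) then - (/2)^(S (fw sigma n)) else (/2)^(S (fw sigma n)))).
      { pose proof (bw_fw _ _ sigma n) as Bn.
        rewrite (norm2_flip_gen (bij_comp psi sigma) G G1 (fw sigma n)); cbn; rewrite ?Bn; auto.
        - intros j Hj. unfold G1. apply flip_other. rewrite fw_bw. intro E. apply Hj.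
          rewrite <- E. symmetry. apply fw_bw.
        - unfold G1. apply flip_at. }
      exists ((f G1 - f G) / (norm2 psi G1 - norm2 psi G)),
             ((f G1 - f G) / (norm2 (bij_comp psi sigma) G1 - norm2 (bij_comp psi sigma) G)),
             (Rabs (f G1 - f G)).
      split; [|split; [|split; [|split]]].
      - apply Hl1; [apply flip_Gprime; exact HG | apply flip_neq |].
        intros e0 Hi. apply (Ag l1); auto. intros x Hx; apply in_or_app; left; exact Hx.
      - apply Hl2; [apply flip_Gprime; exact HG | apply flip_neq |].
        intros e0 Hi. apply (Ag l2); auto. intros x Hx; apply in_or_app; right; exact Hx.
      - rewrite D1. apply abs_quot.
      - rewrite D2. apply abs_quot.
      - apply Rabs_pos. }
    destruct (not_Sinf_up _ HS M) as [n1 [Hn1 Hs1]].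
    destruct (not_Sinf_down _ HS M) as [n2 [Hn2 Hs2]].
    destruct (Key n1 Hn1) as (q1 & r1 & A1 & a1 & b1 & c1 & d1 & g1).
    destruct (Key n2 Hn2) as (q2 & r2 & A2 & a2 & b2 & c2 & d2 & g2).
    pose proof (pow2_mono _ _ Hs1). pose proof (pow2_mono _ _ Hs2).
    assert (R1 : Rabs r1 >= 2 * Rabs q1) by (rewrite c1, d1; nra).
    assert (R2 : Rabs q2 >= 2 * Rabs r2) by (rewrite c2, d2; nra).
    pose proof (Rabs_triang_inv L q1). rewrite (Rabs_minus_sym L q1) in *.
    pose proof (Rabs_triang_inv r1 L').
    pose proof (Rabs_triang_inv q2 L).
    pose proof (Rabs_triang_inv L' r2). rewrite (Rabs_minus_sym L' r2) in *.
    unfold e in *. lra.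
Qed.
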